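(* Let $n\ge3$. All roots of $\Phi_n(x)=0$ are real, and they are simple except $x=2$, which is a double root. Let $\tilde\alpha_n$ be the minimal root. If $n$ is even, then \[ \tilde\alpha_n=\alpha^{(n)}_n=2\cos\frac{n\pi}{n+1}=-2\cos\frac{\pi}{n+1}. \] If $n$ is odd, then $-2<\tilde\alpha_n<\alpha^{(n)}_n$.
   Context: $U_n$ is the Chebyshev polynomial of the second kind, $U_n(\cos\theta)=\sin((n+1)\theta)/\sin\theta$, $\tilde U_n(x)=U_n(x/2)$, and $\Phi_n(x)=((n+1)x^2-6x-4n)\tilde U_n(x)+2(x+2)\tilde U_{n-1}(x)+2(x+2)$. For $1\le l\le n$, $\alpha^{(n)}_l=2\cos\frac{l\pi}{n+1}$. *)

(* Defs.v *)
From HB Require Import structures.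
From mathcomp Require Import all_boot all_order all_algebra.
From mathcomp Require Import all_classical all_reals all_analysis.
Set Implicit Arguments. Unset Strict Implicit. Unset Printing Implicit Defensive.
Import Order.TTheory GRing.Theory Num.Theory.
Local Open Scope ring_scope.

(* Ut n = \tilde U_n(x) = U_n(x/2), the rescaled Chebyshev polynomial of the
   second kind, given by its standard three-term recurrence:
   Ut 0 = 1, Ut 1 = X, Ut (m+2) = X * Ut (m+1) - Ut m. *)
Fixpoint Utpair (R : nzRingType) (n : nat) : {poly R} * {poly R} :=
  (* returns (Ut n, Ut (n+1)) *)
  match n with
  | 0 => (1, 'X)
  | m.+1 => let: (u0, u1) := Utpair R m in (u1, 'X * u1 - u0)
  end.
Definition Ut (R : nzRingType) (n : nat) : {poly R} := (Utpair R n).1.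

Definition Phi (R : nzRingType) (n : nat) : {poly R} :=
  ((n.+1)%:R *: 'X^2 - 6%:R *: 'X - (4 * n)%:R%:P) * Ut R n
  + 2%:R *: ('X + 2%:R%:P) * Ut R n.-1 + 2%:R *: ('X + 2%:R%:P).

Definition alpha (R : realType) (n l : nat) : R :=
  2 * cos (l%:R * pi / (n.+1)%:R).

(* Main.v *)
Require Import Defs.
From HB Require Import structures.
From mathcomp Require Import all_boot all_order all_algebra.
From mathcomp Require Import all_classical all_reals all_analysis.
From mathcomp Require Import ring lra zify.
Import Order.TTheory GRing.Theory Num.Theory.
Import numFieldNormedType.Exports.
Local Open Scope ring_scope.

Lemma UtS' (R : realType) k : Ut R k.+2 = 'X * Ut R k.+1 - Ut R k.
Proof. by rewrite /Ut /=; case: (Utpair R k). Qed.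

Fixpoint vp (a q2 : int) (k : nat) : int * int :=
  match k with 0 => (1, a) | k'.+1 => let: (v0, v1) := vp a q2 k' in (v1, a * v1 - q2 * v0) end.

Lemma vp2 a q2 k : (vp a q2 k).2 = (vp a q2 k.+1).1.
Proof. by rewrite /=; case: (vp a q2 k). Qed.
Lemma vpS a q2 k : (vp a q2 k.+2).1 = a * (vp a q2 k.+1).1 - q2 * (vp a q2 k).1.
Proof. by rewrite /=; case: (vp a q2 k). Qed.


Lemma Ut_vp (R : realType) (a : int) (q : nat) k : (0 < q)%N ->
  (q%:R ^+ k) * (Ut R k).[a%:~R / q%:R] = ((vp a (q%:Z ^+ 2) k).1)%:~R.
Proof.
move=> q0.
have qn : q%:R != 0 :> R by rewrite pnatr_eq0 -lt0n.
have H : forall m, (q%:R ^+ m) * (Ut R m).[a%:~R / q%:R] = ((vp a (q%:Z ^+ 2) m).1)%:~R /\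
   (q%:R ^+ m.+1) * (Ut R m.+1).[a%:~R / q%:R] = ((vp a (q%:Z ^+ 2) m.+1).1)%:~R.
  elim => [|i [IH1 IH2]].
    split; first by rewrite expr0 mul1r /Ut /= hornerC.
    by rewrite /Ut /= hornerX expr1 mulrC divfK.
  split => //.
  rewrite UtS' vpS hornerD hornerN hornerM hornerX.
  set V1 := (vp a _ i.+1).1 in IH2 *; set V0 := (vp a _ i).1 in IH1 *.
  have -> : ((a * V1 - (q%:Z ^+ 2) * V0)%:~R : R) = a%:~R * V1%:~R - (q%:R)^+2 * V0%:~R.
    by rewrite rmorphB !rmorphM expr2.
  rewrite -IH1 -IH2 !exprS. by field.
by case: (H k).
Qed.

Lemma vp_mod (a : int) (p q : nat) k : exists z : int, (vp a ((p * q)%:Z ^+ 2) k).1 = a ^+ k + p%:Z * z.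
Proof.
have H : forall m, (exists z : int, (vp a ((p * q)%:Z ^+ 2) m).1 = a ^+ m + p%:Z * z) /\
                  (exists z : int, (vp a ((p * q)%:Z ^+ 2) m.+1).1 = a ^+ m.+1 + p%:Z * z).
  elim => [|i [[z1 IH1] [z2 IH2]]].
    by split; [exists 0; rewrite /= mulr0 addr0 expr0| exists 0; rewrite /= mulr0 addr0 expr1].
  split; first by exists z2.
  rewrite vpS IH1 IH2.
  exists (a * z2 - p%:Z * q%:Z ^+ 2 * (a ^+ i + p%:Z * z1)).
  rewrite PoszM !exprS; ring.
by case: (H k).
Qed.

Lemma Ut_nonroot (R : realType) n : (3 <= n)%N ->
  (Ut R n).[- ((2 * n)%:R / (n + 2)%:R)] != 0.
Proof.
move=> n3.
set g := gcdn (2 * n) (n + 2).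
have g0 : (0 < g)%N by rewrite gcdn_gt0; apply/orP; right; rewrite addn2.
set a := ((2 * n) %/ g)%N. set q := ((n + 2) %/ g)%N.
have ea : (a * g = 2 * n)%N by rewrite divnK // dvdn_gcdl.
have eq : (q * g = n + 2)%N by rewrite divnK // dvdn_gcdr.
have q1 : (1 < q)%N.
  case: q eq => [|[|q']] //; first by rewrite mul0n addn2.
  rewrite mul1n => eg.
  have : (n + 2 %| 2 * n)%N by rewrite -eg dvdn_gcdl.
  move=> h.
  have h4 : (n + 2 %| 4)%N.
    have h2 : (n + 2 %| 2 * (n + 2))%N by rewrite dvdn_mull.
    have := dvdn_sub h2 h.
    by rewrite (_ : (2 * (n + 2) - 2 * n = 4)%N) //; lia.
  have := dvdn_leq _ h4; lia.
set p := pdiv q.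
have pp : prime p by exact: pdiv_prime.
have pq : (p %| q)%N by exact: pdiv_dvd.
have pa : ~~ (p %| a)%N.
  apply/negP => pa.
  have h1 : (p * g %| 2 * n)%N by rewrite -ea dvdn_mul.
  have h2 : (p * g %| n + 2)%N by rewrite -eq dvdn_mul.
  have h3 : (p * g %| g)%N by rewrite /g dvdn_gcd h1 h2.
  have : (p * g <= 1 * g)%N by rewrite mul1n dvdn_leq.
  by rewrite leq_pmul2r // leqNgt prime_gt1.
have ey : - ((2 * n)%:R / (n + 2)%:R) = (- (a%:Z))%:~R / q%:R :> R.
  rewrite -ea -eq !natrM rmorphN /=.
  have gn : g%:R != 0 :> R by rewrite pnatr_eq0 -lt0n.
  have qn : q%:R != 0 :> R by rewrite pnatr_eq0 -lt0n ltnW.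
  rewrite -mulNr. field. by apply/andP.
rewrite ey.
have qn : (q%:R ^+ n : R) != 0 by rewrite expf_neq0 // pnatr_eq0 -lt0n ltnW.
apply/negP => /eqP H0.
have := Ut_vp R (- (a%:Z)) q n (ltnW q1); rewrite H0 mulr0.
have [z ez] := vp_mod (- (a%:Z)) p (q %/ p) n.
rewrite mulnC (divnK pq) in ez; rewrite ez.
move=> /esym/eqP; rewrite intr_eq0 => /eqP e.
have : `|((- (a%:Z)) ^+ n)%R|%N = (p * `|z|)%N.
  by rewrite (_ : ((- (a%:Z)) ^+ n)%R = - (p%:Z * z)) ?abszN ?abszM //; apply/eqP; rewrite -subr_eq0 opprK e.
rewrite abszX abszN absz_nat => h.
have : (p %| a ^ n)%N by rewrite h dvdn_mulr.
by rewrite Euclid_dvdX // (negbTE pa).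
Qed.

Section S.
Variable R : realType.

Lemma Ut0 : Ut R 0 = 1. Proof. by []. Qed.
Lemma Ut1 : Ut R 1 = 'X. Proof. by []. Qed.
Lemma Utpair2 k : (Utpair R k).2 = Ut R k.+1.
Proof. by rewrite /Ut /=; case: (Utpair R k). Qed.
Lemma UtS k : Ut R k.+2 = 'X * Ut R k.+1 - Ut R k.
Proof.
by rewrite /Ut /=; case: (Utpair R k).
Qed.

Lemma Ut_sin k t : sin t * (Ut R k).[2 * cos t] = sin (k.+1%:R * t).
Proof.
have H : forall m, sin t * (Ut R m).[2 * cos t] = sin (m.+1%:R * t) /\
   sin t * (Ut R m.+1).[2 * cos t] = sin (m.+2%:R * t).
  elim => [|i [IH1 IH2]].
    rewrite Ut0 Ut1 hornerX hornerC mulr1 mul1r; split => //.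
    by rewrite (_ : 2%:R * t = t + t) ?sinD; [ring| rewrite mulr2n mulrDl mul1r].
    
  split => //.
  rewrite UtS hornerD hornerN hornerM hornerX mulrBr.
  rewrite mulrCA IH2 IH1.
  have -> : i.+3%:R * t = i.+2%:R * t + t by rewrite -[i.+3]addn1 natrD mulrDl mul1r.
  have -> : i.+1%:R * t = i.+2%:R * t - t by rewrite -[i.+2]addn1 natrD mulrDl mul1r addrK.
  rewrite sinB sinD; ring.
by case: (H k).
Qed.

Definition Qf (n : nat) (x : R) := (n.+1)%:R * x^+2 - 6 * x - (4*n)%:R.
Definition G (n : nat) (t : R) := 
  Qf n (2 * cos t) * cos ((n.+1)%:R * t / 2) + 2 * (2 * cos t + 2) * cos ((n.+1)%:R * t / 2 - t).

Lemma Phi_horner n x : (Phi R n).[x] =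
  Qf n x * (Ut R n).[x] + 2 * (x + 2) * (Ut R n.-1).[x] + 2 * (x + 2).
Proof. rewrite /Phi /Qf !hornerE; ring. Qed.


Lemma Phi_G n t : (0 < n)%N ->
  sin t * (Phi R n).[2 * cos t] = 2 * sin ((n.+1)%:R * t / 2) * G n t.
Proof.
move=> n0; rewrite Phi_horner /G.
set x := 2 * cos t.
transitivity (Qf n x * (sin t * (Ut R n).[x]) + 2 * (x + 2) * (sin t * (Ut R n.-1).[x])
   + 2 * (x + 2) * sin t); first by ring.
rewrite Ut_sin Ut_sin prednK //.
set A := (n.+1)%:R * t / 2.
have e1 : n.+1%:R * t = A + A by rewrite /A; field.
have e2 : n%:R * t = A + (A - t).
  by rewrite addrA -e1 -[n.+1]addn1 natrD mulrDl mul1r addrK.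
have e3 : t = A - (A - t) by rewrite opprB addrC subrK.
have e4 : sin t = sin (A - (A - t)) by rewrite -e3.
rewrite e1 e2 e4 (sinD A A) (sinD A (A - t)) (sinB A (A - t)); ring.
Qed.


Lemma cos_jpi j : cos (j%:R * pi) = (-1) ^+ j :> R.
Proof.
elim: j => [|j IH]; first by rewrite mul0r cos0 expr0.
by rewrite -addn1 natrD mulrDl mul1r cosDpi IH exprD expr1 mulrN1.
Qed.
Lemma sin_jpi j : sin (j%:R * pi) = 0 :> R.
Proof.
elim: j => [|j IH]; first by rewrite mul0r sin0.
by rewrite -addn1 natrD mulrDl mul1r sinDpi IH oppr0.
Qed.

Lemma n1_neq0 n : 1 + n%:R != 0 :> R.
Proof. by rewrite addrC natr1 pnatr_eq0. Qed.

Definition tk (n k : nat) : R := k%:R * pi / (n.+1)%:R.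

Lemma A_tk n k : (n.+1)%:R * tk n k / 2 = k%:R * pi / 2.
Proof. rewrite /tk; field; exact: n1_neq0. Qed.

Lemma G_even n j : G n (tk n j.*2) =
  (-1) ^+ j * ((2 * cos (tk n j.*2) - 2) * ((n.+2)%:R * (2 * cos (tk n j.*2)) + (2 * n)%:R)).
Proof.
rewrite /G A_tk.
have -> : j.*2%:R * pi / 2 = j%:R * pi :> R by rewrite -muln2 natrM; field.
rewrite cosB cos_jpi sin_jpi /Qf !natrM -[n.+2]addn2 -[n.+1]addn1 !natrD; ring.
Qed.

Lemma G_odd n j : G n (tk n j.*2.+1) =
  (-1) ^+ j * (2 * (2 * cos (tk n j.*2.+1) + 2) * sin (tk n j.*2.+1)).
Proof.
rewrite /G A_tk.
have -> : j.*2.+1%:R * pi / 2 = j%:R * pi + pi / 2 :> R.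
  by rewrite -addn1 -muln2 natrD natrM; field.
rewrite cosB cosD sinD cos_jpi sin_jpi cos_pihalf sin_pihalf; ring.
Qed.

Lemma tk_gt0 n k : (0 < k)%N -> 0 < tk n k.
Proof. by move=> k0; rewrite /tk divr_gt0 ?mulr_gt0 ?ltr0n ?pi_gt0. Qed.
Lemma tk_ltpi n k : (k < n.+1)%N -> tk n k < pi.
Proof.
move=> kn; rewrite /tk ltr_pdivrMr ?ltr0n // mulrC ltr_pM2l ?pi_gt0 // ltr_nat //.
Qed.
Lemma tk_lt n k l : (k < l)%N -> tk n k < tk n l.
Proof.
by move=> kl; rewrite /tk ltr_pM2r ?invr_gt0 ?ltr0n // ltr_pM2r ?pi_gt0 // ltr_nat.
Qed.
Lemma tk_n1 n : tk n n.+1 = pi.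
Proof. rewrite /tk; field; exact: n1_neq0. Qed.



Lemma Phi_even_root n j : (0 < n)%N -> (0 < j)%N -> (j.*2 <= n)%N ->
  (Phi R n).[2 * cos (tk n j.*2)] = 0.
Proof.
move=> n0 j0 jn.
have s0 : 0 < sin (tk n j.*2).
  apply: sin_gt0_pi; rewrite tk_gt0 ?tk_ltpi //; first by rewrite double_gt0.
have := @Phi_G n (tk n j.*2) n0; rewrite A_tk.
have -> : j.*2%:R * pi / 2 = j%:R * pi :> R by rewrite -muln2 natrM; field.
rewrite sin_jpi mulr0 mul0r => /eqP; rewrite mulf_eq0 (gt_eqF s0) /= => /eqP //.
Qed.


Lemma cont_hcos (p : {poly R}) : continuous (fun t : R => p.[cos t]).
Proof. move=> t; apply: continuous_comp; [exact: continuous_cos | exact: continuous_horner]. Qed.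
Lemma cont_cosc (c : R) : continuous (fun t : R => cos (c * t)).
Proof. move=> t; apply: continuous_comp; [exact: mulrl_continuous | exact: continuous_cos]. Qed.

Lemma G_cont n : continuous (G n).
Proof.
pose P1 : {poly R} := ((n.+1)%:R * 4)%:P * 'X^2 - 12%:P * 'X - ((4 * n)%:R)%:P.
pose P2 : {poly R} := 2%:P * (2%:P * 'X + 2%:P).
have -> : G n = (fun t => P1.[cos t] * cos ((n.+1)%:R / 2 * t)) \+
               (fun t => P2.[cos t] * cos (((n.+1)%:R / 2 - 1) * t)).
  apply/funext => t; rewrite /G /P1 /P2 /Qf /= !(hornerD, hornerN, hornerM, hornerC, hornerX, hornerXn).
  have -> : (n.+1)%:R * t / 2 = (n.+1)%:R / 2 * t by ring.
  have -> : (n.+1)%:R / 2 * t - t = ((n.+1)%:R / 2 - 1) * t by ring.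
  ring.
move=> t; apply: continuousD; apply: continuousM; 
  (apply: cont_hcos || apply: cont_cosc).
Qed.


Lemma prod_neg (x y : R) : x * y < 0 -> (x < 0 /\ 0 < y) \/ (0 < x /\ y < 0).
Proof.
move=> h.
have [x0|x0|x0] := ltrgtP x 0.
- left; split => //. have [y0|y0] := ltP 0 y => //. 
  have : 0 <= x * y by rewrite mulr_le0 // ltW. lra.
- right; split => //. have [y0|y0] := ltP y 0 => //.
  have : 0 <= x * y by rewrite mulr_ge0 // ltW. lra.
- by move: h; rewrite x0 mul0r ltxx.
Qed.
Lemma prod4 (a b m : R) : a * b < 0 -> m != 0 -> (a * m < 0) || (m * b < 0).
Proof.
move=> h hm.
case: (prod_neg _ _ h) => [[a0 b0]|[a0 b0]]; have [m0|m0] := ltP 0 m.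
- by apply/orP; left; rewrite pmulr_llt0.
- have m0' : m < 0 by rewrite lt_neqAle hm m0.
  by apply/orP; right; rewrite nmulr_rlt0.
- by apply/orP; right; rewrite pmulr_rlt0.
- have m0' : m < 0 by rewrite lt_neqAle hm m0.
  by apply/orP; left; rewrite nmulr_llt0.
Qed.

Lemma ivt_root (f : R -> R) a b : continuous f -> a < b -> f a * f b < 0 ->
  exists2 c, a < c < b & f c = 0.
Proof.
move=> fc ab fab.
have [c cab fc0] : exists2 c, c \in `[a, b] & f c = 0.
  apply: IVT; first exact: ltW.
    by apply: continuous_subspaceT => x; apply: fc.
  rewrite ge_min le_max.
  by case: (prod_neg _ _ fab) => [[h1 h2]|[h1 h2]]; rewrite ?(ltW h1) ?(ltW h2) ?orbT.
exists c => //.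
move: cab; rewrite in_itv /= => /andP[ac cb].
rewrite !lt_neqAle ac cb andbT /=.
rewrite andbT; apply/andP; split; apply/negP => /eqP E.
  by move: fab; rewrite E fc0 mul0r ltxx.
by move: fab; rewrite -E fc0 mulr0 ltxx.
Qed.

Lemma ivt_root3 (f : R -> R) a m b : continuous f -> a < m -> m < b ->
  f a * f b < 0 -> f m != 0 -> exists2 c, a < c < b & (c != m) && (f c == 0).
Proof.
move=> fc am mb fab fm.
have := prod4 _ _ _ fab fm.
case/orP => h.
  have [c /andP[ac cm] fc0] := ivt_root _ _ _ fc am h.
  exists c; first by rewrite ac (lt_trans cm mb).
  by rewrite (lt_eqF cm) fc0 eqxx.
have [c /andP[mc cb] fc0] := ivt_root _ _ _ fc mb h.
exists c; first by rewrite cb (lt_trans am mc).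
by rewrite (gt_eqF mc) fc0 eqxx.
Qed.


Lemma cos_lt1 (t : R) : 0 < t <= pi -> cos t < 1.
Proof.
move=> /andP[t0 tpi]; rewrite -cos0 ltr_cos // in_itv /= ?lexx ?pi_ge0 ?(ltW t0) //.
Qed.
Lemma cos_gtN1 (t : R) : 0 <= t < pi -> -1 < cos t.
Proof.
move=> /andP[t0 tpi]; rewrite -cospi ltr_cos // in_itv /= ?lexx ?pi_ge0 ?t0 ?(ltW tpi) //.
Qed.

Lemma tk_in n k : (0 < k)%N -> (k < n.+1)%N -> 0 < tk n k < pi.
Proof. by move=> k0 kn; rewrite tk_gt0 // tk_ltpi. Qed.

Lemma sin_tk_gt0 n k : (0 < k)%N -> (k < n.+1)%N -> 0 < sin (tk n k).
Proof. by move=> k0 kn; apply: sin_gt0_pi; apply: tk_in. Qed.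

Lemma Ut_grid n k : (0 < k)%N -> (k < n.+1)%N -> (Ut R n).[2 * cos (tk n k)] = 0.
Proof.
move=> k0 kn; have := Ut_sin n (tk n k).
rewrite (_ : n.+1%:R * tk n k = k%:R * pi); last by rewrite /tk; field; exact: n1_neq0.
rewrite sin_jpi => /eqP; rewrite mulf_eq0 (gt_eqF (sin_tk_gt0 _ _ k0 kn)) /=.
by move/eqP.
Qed.

Lemma lin_ne0 n k : (3 <= n)%N -> (0 < k)%N -> (k < n.+1)%N ->
  (n.+2)%:R * (2 * cos (tk n k)) + (2 * n)%:R != 0.
Proof.
move=> n3 k0 kn; apply/negP => /eqP h.
have e : 2 * cos (tk n k) = - ((2 * n)%:R / (n + 2)%:R).
  have nz : (n.+2)%:R != 0 :> R by rewrite pnatr_eq0.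
  rewrite addn2; apply: (mulfI nz).
  rewrite mulrN [in RHS]mulrCA divff // mulr1; apply/eqP.
  by rewrite -subr_eq0 opprK h.
by have := @Ut_nonroot R n n3; rewrite -e Ut_grid // eqxx.
Qed.

Lemma G_even_ne0 n j : (3 <= n)%N -> (0 < j)%N -> (j.*2 < n.+1)%N -> G n (tk n j.*2) != 0.
Proof.
move=> n3 j0 jn; rewrite G_even !mulf_eq0 negb_or signr_eq0 /= negb_or.
rewrite lin_ne0 ?double_gt0 // andbT subr_eq0.
have := @cos_lt1 (tk n j.*2).
rewrite tk_gt0 ?double_gt0 //= (ltW (tk_ltpi _ _ jn)) => /(_ isT) h.
apply/negP => /eqP e; move: h; lra.
Qed.

Lemma G_root_Phi n (t : R) : (0 < n)%N -> 0 < t < pi -> G n t = 0 -> (Phi R n).[2 * cos t] = 0.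
Proof.
move=> n0 tI g0; have := @Phi_G n t n0; rewrite g0 mulr0 => /eqP.
by rewrite mulf_eq0 (gt_eqF (sin_gt0_pi tI)) /= => /eqP.
Qed.

Lemma Pos_odd n k : (0 < k)%N -> (k < n.+1)%N -> 0 < 2 * (2 * cos (tk n k) + 2) * sin (tk n k).
Proof.
move=> k0 kn; rewrite mulr_gt0 ?sin_tk_gt0 // mulr_gt0 //.
have := @cos_gtN1 (tk n k); rewrite (ltW (tk_gt0 _ _ k0)) tk_ltpi // => /(_ isT); lra.
Qed.

Lemma sign2 i : (-1) ^+ i * (-1) ^+ i = 1 :> R.
Proof. by rewrite -exprMn mulrNN mulr1 expr1n. Qed.

Lemma pair_root n i : (3 <= n)%N -> (i.*2.+3 <= n)%N ->
  exists2 c, tk n i.*2.+1 < c < tk n (i.+1).*2.+1 & (c != tk n (i.+1).*2) && (G n c == 0).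
Proof.
move=> n3 iS.
apply: ivt_root3 (G_cont n) _ _ _ _.
- by apply: tk_lt; rewrite -!muln2; lia.
- by apply: tk_lt; rewrite -!muln2; lia.
- rewrite G_odd G_odd exprS.
  have h1 : (i.*2.+1 < n.+1)%N by move: iS; rewrite -!muln2; lia.
  have h2 : ((i.+1).*2.+1 < n.+1)%N by move: iS; rewrite -!muln2; lia.
  have pa := @Pos_odd n i.*2.+1 isT h1.
  have pb' := @Pos_odd n (i.+1).*2.+1 isT h2.
  set Pa := 2 * _ * _ in pa *. set Pb := 2 * _ * _ in pb' *.
  rewrite (_ : (-1) ^+ i * Pa * (-1 * (-1) ^+ i * Pb) = - (((-1) ^+ i * (-1) ^+ i) * (Pa * Pb))); last by ring.
  by rewrite sign2 mul1r oppr_lt0 mulr_gt0.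
- by apply: G_even_ne0 => //; move: iS; rewrite -!muln2; lia.
Qed.


Lemma sin_le (v : R) : 0 <= v -> sin v <= v.
Proof.
rewrite le_eqVlt => /orP[/eqP <-|v0]; first by rewrite sin0.
have [c _ h] := @MVT R sin cos 0 v v0 (fun x _ => is_derive_sin x)
  (continuous_subspaceT (@continuous_sin R)).
move: h; rewrite sin0 !subr0 => ->.
by rewrite ler_piMl ?cos_le1 // ltW.
Qed.

Lemma cos_ge (u : R) : 0 <= u <= pi -> 1 - u ^+ 2 / 2 <= cos u.
Proof.
move=> /andP[u0 upi].
have e : cos u = 1 - 2 * sin (u / 2) ^+ 2.
  have := cos_mulr2n (u / 2); rewrite (_ : (u / 2) *+ 2 = u); last by rewrite -mulr_natr; field.
  move=> ->; rewrite cos2sin2; ring.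
have s0 : 0 <= sin (u / 2) by apply: sin_ge0_pi; apply/andP; split; lra.
have s1 : sin (u / 2) <= u / 2 by apply: sin_le; lra.
rewrite e.
have : sin (u / 2) ^+ 2 <= (u / 2) ^+ 2 by rewrite ler_pXn2r // ?nnegrE //; lra.
move=> h; nra.
Qed.

Lemma cos_bound n : (4 <= n)%N -> n%:R / (n + 2)%:R < cos (pi / (n.+1)%:R) :> R.
Proof.
move=> n4.
set N : R := n%:R.
have N4 : 4 <= N by rewrite /N (ler_nat R 4 n).
have pi4 : pi < 4 :> R by have := @pihalf_lt2 R; lra.
have pi0 : 0 < pi :> R := pi_gt0 R.
set u := pi / (n.+1)%:R.
have eu : u = pi / (N + 1) by rewrite /u /N natr1.
have u0 : 0 <= u <= pi.
  rewrite eu; apply/andP; split; first by apply: divr_ge0; lra.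
  rewrite ler_pdivrMr; last lra. nra.
apply: lt_le_trans; last exact: (cos_ge _ u0).
rewrite natrD -/N eu.
have key : 0 < 4 * (N + 1) ^+ 2 - pi ^+ 2 * (N + 2).
  have p16 : pi ^+ 2 < 16 :> R.
    have h : 0 < (4 - pi) * (4 + pi) :> R by apply: mulr_gt0; lra.
    have e : (4 - pi) * (4 + pi) = 16 - pi ^+ 2 :> R by ring.
    lra.
  have h1 : 16 * (N + 2) < 4 * (N + 1) ^+ 2 by nra.
  have h2 : pi ^+ 2 * (N + 2) <= 16 * (N + 2) by rewrite ler_pM2r; lra.
  lra.
rewrite -subr_gt0.
have -> : 1 - (pi / (N + 1)) ^+ 2 / 2 - N / (N + 2) =
   (4 * (N + 1) ^+ 2 - pi ^+ 2 * (N + 2)) / (2 * (N + 1) ^+ 2 * (N + 2)).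
  field; apply/andP; split; lra.
apply: divr_gt0 => //; nra.
Qed.


Lemma cos_tknn n : cos (tk n n) = - cos (pi / (n.+1)%:R).
Proof.
have -> : tk n n = pi - pi / (n.+1)%:R by rewrite /tk; field; exact: n1_neq0.
by rewrite cosB cospi sinpi mul0r addr0 mulN1r.
Qed.

Lemma last_even n i : n = (i.+2).*2 ->
  exists2 c, tk n (i.+1).*2.+1 < c < tk n n & G n c = 0.
Proof.
move=> en.
have n4 : (4 <= n)%N by rewrite en -!muln2; lia.
apply: ivt_root (G_cont n) _ _; first by apply: tk_lt; rewrite en -!muln2; lia.
have -> : tk n n = tk n (i.+2).*2 by rewrite -en.
rewrite G_odd G_even -en.
have h1 : ((i.+1).*2.+1 < n.+1)%N by rewrite en -!muln2; lia.
have pa := @Pos_odd n (i.+1).*2.+1 isT h1.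
set Pa := 2 * _ * _ in pa *.
set x := 2 * cos (tk n n).
have cb := cos_bound _ n4.
have xe : x = - 2 * cos (pi / (n.+1)%:R) by rewrite /x cos_tknn mulrN mulNr.
have x2 : x - 2 < 0.
  have : 0 < cos (pi / (n.+1)%:R) :> R.
    apply: (le_lt_trans _ cb); apply: divr_ge0; rewrite ler0n //.
  lra.
have xl : (n.+2)%:R * x + (2 * n)%:R < 0.
  rewrite xe natrM -addn2 natrD.
  set c := cos _ in cb *.
  have nz : 0 < n%:R + 2%:R :> R by rewrite -natrD ltr0n addn2.
  move: cb; rewrite ltr_pdivrMr ?natrD //.
  nra.
have Q : 0 < (x - 2) * ((n.+2)%:R * x + (2 * n)%:R) by rewrite nmulr_rgt0.
set Qv := (x - 2) * _ in Q *.
rewrite (_ : (-1) ^+ i.+1 * Pa * ((-1) ^+ i.+2 * Qv) = - (((-1) ^+ i.+1 * (-1) ^+ i.+1) * (Pa * Qv))); last first.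
  by rewrite [(-1) ^+ i.+2]exprS; ring.
by rewrite sign2 mul1r oppr_lt0 mulr_gt0.
Qed.

Lemma extra_odd n m : n = m.*2.+1 ->
  exists2 c, tk n n < c < pi & G n c = 0.
Proof.
move=> en.
rewrite -(tk_n1 n).
apply: ivt_root (G_cont n) _ _; first by apply: tk_lt.
have -> : tk n n.+1 = tk n (m.+1).*2 by rewrite en doubleS.
have -> : tk n n = tk n m.*2.+1 by rewrite -en.
rewrite G_odd G_even.
have h1 : (m.*2.+1 < n.+1)%N by rewrite en.
have pa := @Pos_odd n m.*2.+1 isT h1.
set Pa := 2 * _ * _ in pa *.
have -> : tk n (m.+1).*2 = pi by rewrite doubleS -en tk_n1.
rewrite cospi.
rewrite (_ : (-1) ^+ m * Pa * ((-1) ^+ m.+1 * ((2 * -1 - 2) * ((n.+2)%:R * (2 * -1) + (2 * n)%:R)))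
   = - (((-1) ^+ m * (-1) ^+ m) * (Pa * 16))); last first.
  rewrite exprS -[n.+2]addn2 natrD natrM; ring.
by rewrite sign2 mul1r oppr_lt0 mulr_gt0.
Qed.


Lemma Ut_at2 k : (Ut R k).[2] = (k.+1)%:R /\ 6 * (Ut R k)^`().[2] = (k * k.+1 * k.+2)%:R.
Proof.
have H : forall m, ((Ut R m).[2] = (m.+1)%:R /\ 6 * (Ut R m)^`().[2] = (m * m.+1 * m.+2)%:R) /\
  ((Ut R m.+1).[2] = (m.+2)%:R /\ 6 * (Ut R m.+1)^`().[2] = (m.+1 * m.+2 * m.+3)%:R).
  elim => [|i [[A B] [C D]]].
    rewrite Ut0 Ut1 derivC derivX hornerC hornerX horner0 mulr0 mulr1; split => //.
  split => //; split.
    by rewrite UtS hornerD hornerN hornerM hornerX A C; rewrite -[i.+3]addn3 -[i.+2]addn2 -[i.+1]addn1 !natrD; ring.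
  rewrite UtS derivB derivM derivX mul1r !(hornerD, hornerN, hornerM, hornerX).
  have e1 : (Ut R i.+1)^`().[2] = (i.+1 * i.+2 * i.+3)%:R / 6.
    by rewrite -D; field.
  have e0 : (Ut R i)^`().[2] = (i * i.+1 * i.+2)%:R / 6.
    by rewrite -B; field.
  rewrite e1 e0 C.
  rewrite !natrM -[i.+4]addn4 -[i.+3]addn3 -[i.+2]addn2 -[i.+1]addn1 !natrD; by field.
by case: (H k).
Qed.


Lemma Phi_at2 n : (0 < n)%N -> (Phi R n).[2] = 0 /\ (deriv (Phi R n)).[2] = 0.
Proof.
case: n => [//|m] _.
have [A B] := Ut_at2 m.+1. have [C D] := Ut_at2 m.
split.
  rewrite Phi_horner /= A C /Qf.
  rewrite !natrM -[m.+2]addn2 -[m.+1]addn1 !natrD; ring.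
rewrite /Phi !(poly.derivD, poly.derivB, poly.derivM, poly.derivZ, poly.derivX, poly.derivC, poly.derivXn, poly.derivN).
rewrite !(hornerD, hornerN, hornerM, hornerX, hornerC, hornerZ, hornerXn) /=.
have e1 : (Ut R m.+1)^`().[2] = (m.+1 * m.+2 * m.+3)%:R / 6 by rewrite -B; field.
have e0 : (Ut R m)^`().[2] = (m * m.+1 * m.+2)%:R / 6 by rewrite -D; field.
rewrite e1 e0 A C !natrM -[m.+3]addn3 -[m.+2]addn2 -[m.+1]addn1 !natrD; by field.
Qed.


Lemma Ut_monic k : size (Ut R k) = k.+1 /\ Ut R k \is monic.
Proof.
have H : forall m, (size (Ut R m) = m.+1 /\ Ut R m \is monic) /\
                   (size (Ut R m.+1) = m.+2 /\ Ut R m.+1 \is monic).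
  elim => [|i [[A B] [C D]]].
    by rewrite Ut0 Ut1 size_poly1 size_polyX monic1 monicX.
  split => //.
  have nz : Ut R i.+1 != 0 by rewrite monic_neq0.
  have sx : size ('X * Ut R i.+1) = i.+3 by rewrite mulrC size_mulX // C.
  have lt : (size (- Ut R i)%R < size ('X * Ut R i.+1)%R)%N by rewrite size_polyN A sx.
  rewrite UtS size_polyDl // sx; split => //.
  by rewrite monicE lead_coefDl // mulrC lead_coefMX; apply/eqP/monicP.
by case: (H k).
Qed.

Lemma Phi_size n : (0 < n)%N -> size (Phi R n) = n.+3.
Proof.
move=> n0.
have [sU mU] := Ut_monic n.
have [sU' mU'] := Ut_monic n.-1.
set Qp : {poly R} := (n.+1)%:R *: 'X^2 - 6%:R *: 'X - (4 * n)%:R%:P.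
have sQ : size Qp = 3.
  rewrite /Qp -addrA size_polyDl size_scale ?size_polyXn ?pnatr_eq0 //.
  apply: (leq_ltn_trans (size_polyD _ _)); rewrite size_polyN size_polyN.
  have := size_scale_leq 6%:R ('X : {poly R}); rewrite size_polyX => h.
  have := size_polyC_leq1 ((4 * n)%:R : R).
  rewrite gtn_max; move=> h'; apply/andP; split; [exact: (leq_ltn_trans h) | exact: (leq_ltn_trans h')].
have Qnz : Qp != 0 by rewrite -size_poly_eq0 sQ.
have s1 : size (Qp * Ut R n) = n.+3 by rewrite size_Mmonic // sQ sU.
rewrite /Phi -/Qp -addrA size_polyDl s1 //.
apply: (leq_ltn_trans (size_polyD _ _)).
rewrite gtn_max.
have sX2 : (size (2%:R *: ('X + 2%:R%:P) : {poly R}) <= 2)%N.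
  by apply: (leq_trans (size_scale_leq _ _)); rewrite size_XaddC.
apply/andP; split; last by apply: (leq_ltn_trans sX2).
apply: (leq_ltn_trans (size_polyMleq _ _)).
have := leq_add sX2 (eq_leq sU'); rewrite prednK //.
move=> h; apply: (leq_ltn_trans (leq_pred _)). 
apply: (leq_ltn_trans h); lia.
Qed.


Lemma double_root (p : {poly R}) c : p.[c] = 0 -> (deriv p).[c] = 0 ->
  exists r, p = r * ('X - c%:P) ^+ 2.
Proof.
move=> pc dpc.
have /factor_theorem [q eq] : root p c by apply/eqP.
move: dpc; rewrite eq poly.derivM poly.derivXsubC mulr1 hornerD hornerM hornerXsubC subrr mulr0 add0r => qc.
have /factor_theorem [r er] : root q c by apply/eqP.
by exists r; rewrite er expr2 mulrA.
Qed.

Lemma build n m : (3 <= n)%N -> (m.*2.+1 <= n)%N -> exists L : seq R,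
  [/\ size L = m.*2, uniq L & forall t, t \in L ->
      [/\ 0 < t, t < tk n m.*2.+1 & (Phi R n).[2 * cos t] = 0]].
Proof.
move=> n3; elim: m => [|m IH] hm.
  by exists [::]; split.
have hm' : (m.*2.+1 <= n)%N by move: hm; rewrite -!muln2; lia.
have [L [sL uL HL]] := IH hm'.
have hm3 : (m.*2.+3 <= n)%N by move: hm; rewrite -!muln2; lia.
have [c /andP[c1 c2] /andP[cm /eqP Gc]] := pair_root _ _ n3 hm3.
have t12 : tk n m.*2.+1 < tk n (m.+1).*2 by apply: tk_lt; rewrite -!muln2; lia.
have t23 : tk n (m.+1).*2 < tk n (m.+1).*2.+1 by apply: tk_lt.
have t13 : tk n m.*2.+1 < tk n (m.+1).*2.+1 := lt_trans t12 t23.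
have t0 : 0 < tk n m.*2.+1 by apply: tk_gt0.
have tpi : tk n (m.+1).*2.+1 < pi by apply: tk_ltpi; rewrite -!muln2; move: hm; rewrite -!muln2; lia.
exists [:: tk n (m.+1).*2, c & L]; split.
- by rewrite /= sL doubleS.
- rewrite /= uL andbT negb_or eq_sym cm /=; apply/andP; split.
    apply/negP => /HL [_ h _]; move: (lt_trans h t12); by rewrite ltxx.
  by apply/negP => /HL [_ h _]; move: (lt_trans h c1); rewrite ltxx.
- move=> t; rewrite !inE => /orP[/eqP ->|/orP[/eqP ->|/HL [h1 h2 h3]]].
  + split; [exact: lt_trans t0 t12 | exact: t23 |].
    apply: Phi_even_root; rewrite -?muln2; lia.
  + split; [exact: lt_trans t0 c1 | exact: c2 |].
    apply: G_root_Phi => //; first lia.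
    by rewrite (lt_trans t0 c1) (lt_trans c2 tpi).
  + by split => //; apply: lt_trans h2 t13.
Qed.


Lemma final_list n : (3 <= n)%N -> exists L : seq R,
 [/\ size L = n, uniq L, (forall t, t \in L -> 0 < t < pi /\ (Phi R n).[2 * cos t] = 0),
   (~~ odd n -> tk n n \in L /\ forall t, t \in L -> t <= tk n n) &
   (odd n -> exists2 t, t \in L & tk n n < t)].
Proof.
move=> n3.
have n0 : (0 < n)%N by lia.
have tnpi : tk n n < pi by apply: tk_ltpi.
have tn0 : 0 < tk n n by apply: tk_gt0.
have := odd_double_half n.
case: (boolP (odd n)) => on /= en.
-
  set k := n./2 in en.
  have en' : n = k.*2.+1 by rewrite -en add1n.
  have [L [sL uL HL]] := @build n k n3 (eq_leq (esym en')).
  rewrite -en' in HL.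
  have [c /andP[c1 c2] Gc] := extra_odd _ _ en'.
  exists (c :: L); split => //.
  + by rewrite /= sL en'.
  + rewrite /= uL andbT; apply/negP => /HL [_ h _]; move: (lt_trans h c1).
    by rewrite ltxx.
  + move=> t; rewrite inE => /orP[/eqP ->|/HL [h1 h2 h3]].
      split; first by rewrite (lt_trans tn0 c1) c2.
      by apply: G_root_Phi => //; rewrite (lt_trans tn0 c1) c2.
    split => //; rewrite h1 /=; exact: lt_trans h2 tnpi.
  + by move=> _; exists c; rewrite ?inE ?eqxx.
-
  rewrite add0n in en.
  have k2 : (2 <= n./2)%N by move: n3; rewrite -en -muln2; lia.
  move: en k2; case: (n./2) => [|[|i]] // en _.
  have en' : n = (i.+2).*2 by rewrite en.
  have hb : ((i.+1).*2.+1 <= n)%N by rewrite en' -!muln2; lia.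
  have [L [sL uL HL]] := @build n i.+1 n3 hb.
  have [c /andP[c1 c2] Gc] := last_even _ _ en'.
  have tlast : tk n (i.+1).*2.+1 < tk n n by apply: tk_lt; rewrite en' -!muln2; lia.
  have t0 : 0 < tk n (i.+1).*2.+1 by apply: tk_gt0.
  exists [:: tk n n, c & L]; split => //.
  + by rewrite /= sL en' !doubleS.
  + rewrite /= uL andbT negb_or (gt_eqF c2) /=; apply/andP; split.
      by apply/negP => /HL [_ h _]; move: (lt_trans h tlast); rewrite ltxx.
    by apply/negP => /HL [_ h _]; move: (lt_trans h c1); rewrite ltxx.
  + move=> t; rewrite !inE => /orP[/eqP ->|/orP[/eqP ->|/HL [h1 h2 h3]]].
    * split; first by rewrite tn0 tnpi.
      by have := @Phi_even_root n i.+2 n0 isT; rewrite -en' => ->.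
    * split; first by rewrite (lt_trans t0 c1) (lt_trans c2 tnpi).
      by apply: G_root_Phi => //; rewrite (lt_trans t0 c1) (lt_trans c2 tnpi).
    * by split => //; rewrite h1 (lt_trans h2 (lt_trans tlast tnpi)).
  + move=> _; split; first by rewrite inE eqxx.
    move=> t; rewrite !inE => /orP[/eqP ->|/orP[/eqP ->|/HL [h1 h2 h3]]] //.
      exact: ltW.
    exact: ltW (lt_trans h2 tlast).
Qed.
End S.

Theorem proposition4p12 (R : realType) (n : nat) (hn : (3 <= n)%N) :
  [/\ Phi R n != 0,
      (* all roots are real: Phi n splits into linear factors over R,
         with x = 2 a double root and every other root simple *)
      exists2 s : seq R,
        Phi R n = lead_coef (Phi R n) *: \prod_(r <- s) ('X - r%:P)
        & count_mem 2 s = 2%N /\ (forall r, r \in s -> r != 2 -> count_mem r s = 1%N)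
    & forall a : R, root (Phi R n) a -> (forall b, root (Phi R n) b -> a <= b) ->
        (~~ odd n -> a = alpha R n n /\ alpha R n n = - 2 * cos (pi / (n.+1)%:R))
        /\ (odd n -> -2 < a < alpha R n n)].
Proof.
have n0 : (0 < n)%N by lia.
have sP := Phi_size R _ n0.
have Pnz : Phi R n != 0 by rewrite -size_poly_eq0 sP.
have [L [sL uL HL Hev Hod]] := final_list R _ hn.
set f := fun t : R => 2 * cos t.
set s0 := map f L.
have inI : forall t, t \in L -> t \in `[0, pi].
  by move=> t /HL [/andP[h1 h2] _]; rewrite in_itv /= (ltW h1) (ltW h2).
have us0 : uniq s0.
  rewrite /s0 map_inj_in_uniq // => x y xL yL /= e.
  apply: (cos_inj (inI _ xL) (inI _ yL)).
  by apply: (mulfI (_ : 2 != 0 :> R)).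
have s0b : forall r, r \in s0 -> [/\ -2 < r, r < 2 & (Phi R n).[r] = 0].
  move=> r /mapP [t tL ->]; have [/andP[t0 tpi] Pt] := HL t tL.
  have c1 := @cos_lt1 R t; rewrite t0 (ltW tpi) in c1; have c1' := c1 isT.
  have c2 := @cos_gtN1 R t; rewrite (ltW t0) tpi in c2; have c2' := c2 isT.
  rewrite /f; split => //; lra.
have [P2a P2b] := Phi_at2 R _ n0.
have [H eH] := @double_root R _ _ P2a P2b.
have rH : all (root H) s0.
  apply/allP => r /s0b [r1 r2 Pr]; move: Pr; rewrite eH hornerM horner_exp hornerXsubC.
  move=> /eqP; rewrite mulf_eq0 expf_eq0 /= subr_eq0 (lt_eqF r2) orbF //.
have ur : uniq_roots s0 by rewrite uniq_rootsE.
have [q eq] := uniq_roots_prod_XsubC rH ur.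
set Pr := \prod_(z <- s0) ('X - z%:P) in eq.
have mPr : Pr \is monic by apply: monic_prod_XsubC.
have sPr : size Pr = n.+1 by rewrite size_prod_XsubC size_map sL.
set M := Pr * ('X - 2%:P) ^+ 2.
have mM : M \is monic by rewrite /M monicMl // monic_exp // monicXsubC.
have sM : size M = n.+3.
  rewrite /M size_monicM // ?size_exp_XsubC ?sPr; [by rewrite addn3| by rewrite expf_neq0 // polyXsubC_eq0].
have ePM : Phi R n = q * M.
  by rewrite eH eq -mulrA.
have qnz : q != 0 by apply: contra Pnz; rewrite ePM => /eqP ->; rewrite mul0r.
have sq : size q = 1%N.
  have := sP; rewrite ePM size_Mmonic // sM; case: (size q) => [|k] //=; lia.
have [c cnz eqc] := size_poly1P _ (introT eqP sq).
have lc : lead_coef (Phi R n) = c by rewrite ePM eqc lead_coefM lead_coefC (monicP mM) mulr1.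
set s := [:: 2, 2 & s0].
have eP : Phi R n = lead_coef (Phi R n) *: \prod_(r <- s) ('X - r%:P).
  rewrite lc /s !big_cons ePM eqc mul_polyC /M -/Pr; congr (_ *: _).
  by rewrite expr2 mulrC -mulrA.
have n2 : 2 \notin s0 by apply/negP => /s0b [_ h _]; rewrite ltxx in h.
have rootsP : forall b, root (Phi R n) b -> b \in s.
  move=> b; rewrite eP rootZ; last by rewrite lc.
  by rewrite root_prod_XsubC.
split => //.
  exists s => //; split.
    by rewrite /s /= eqxx (count_memPn n2).
  move=> r; rewrite !inE => /orP[->//|/orP[->//|rs0]] r2.
  by rewrite /s /= (@eq_sym _ 2 r) (negbTE r2) count_uniq_mem // rs0.
move=> a ra amin.
have as0 : a = 2 \/ a \in s0.
  by move: (rootsP a ra); rewrite !inE => /orP[/eqP->|/orP[/eqP->|->]]; auto.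
have tnn : 0 < tk R n n < pi by rewrite tk_gt0 // tk_ltpi.
split => on.
  have [tnL tle] := Hev on.
  have xr : root (Phi R n) (alpha R n n).
    by have [_ h] := HL _ tnL; apply/eqP.
  have := amin _ xr => ale.
  split; last first.
    rewrite /alpha (_ : n%:R * pi / (n.+1)%:R = tk R n n) // cos_tknn; ring.
  apply/eqP; rewrite eq_le ale /=.
  case: as0 => [->|].
    rewrite /alpha (_ : n%:R * pi / (n.+1)%:R = tk R n n) //.
    have := cos_le1 (tk R n n); lra.
  move=> /mapP [t tL ->]; rewrite /f /alpha (_ : n%:R * pi / (n.+1)%:R = tk R n n) //.
  rewrite ler_pM2l // leNgt ltr_cos ?inI //.
  by rewrite -leNgt tle.
have [t tL tgt] := Hod on.
have rt : root (Phi R n) (f t) by have [_ h] := HL _ tL; apply/eqP.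
have := amin _ rt => aft.
apply/andP; split.
  case: as0 => [->|/s0b [] //]; lra.
apply: (le_lt_trans aft).
have tkI : tk R n n \in `[0, pi] by case/andP: tnn => h1 h2; rewrite in_itv /= (ltW h1) (ltW h2).
by rewrite /f /alpha (_ : n%:R * pi / (n.+1)%:R = tk R n n) // ltr_pM2l // ltr_cos // ?tkI ?(inI _ tL).
Qed.
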